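(* Let $B$ be a commutative ring with identity and $A$ a subring of $B$ containing the identity which is a dense subring of $B$ and a weak completely normal subring of $B$. Then for any two distinct maximal ideals $M, M'$ of $B$, $(M\cap A)+(M'\cap A)=A$.
   Context: $\operatorname{spec} A$ is the set of prime ideals of $A$ with the Zariski topology. A subring $A$ of $B$ is dense in $B$ if for every ideal $I$ of $B$ and every $b\in B\setminus \operatorname{rad}(I)$ there exists $a\in B\setminus\operatorname{rad}(I)$ with $ab\in A$. A subring $A$ of $B$ is a weak completely normal subring of $B$ if for any two distinct maximal ideals $M\neq M'$ of $B$ such that $M\cap A$ and $M'\cap A$ are non-comparable, $\operatorname{cl}_{\operatorname{spec} A}\{M\cap A\}\cap \operatorname{cl}_{\operatorname{spec} A}\{M'\cap A\}=\emptyset$. *)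

(* Defs.v *)
From mathcomp Require Import all_boot all_algebra.
Set Implicit Arguments. Unset Strict Implicit. Unset Printing Implicit Defensive.
Import GRing.Theory.
Local Open Scope ring_scope.

Section Defs.
Variable B : comPzRingType.

Definition is_subring (A : B -> Prop) : Prop :=
  A 1 /\ (forall x y, A x -> A y -> A (x - y)) /\ (forall x y, A x -> A y -> A (x * y)).

Definition is_ideal (I : B -> Prop) : Prop :=
  I 0 /\ (forall x y, I x -> I y -> I (x + y)) /\ (forall b x, I x -> I (b * x)).

Definition is_maximal_ideal (M : B -> Prop) : Prop :=
  is_ideal M /\ ~ M 1 /\
  forall J, is_ideal J -> (forall x, M x -> J x) -> ~ J 1 -> forall x, J x -> M x.

Definition rad (I : B -> Prop) : B -> Prop := fun x => exists n : nat, I (x ^+ n).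

Definition is_ideal_of (A I : B -> Prop) : Prop :=
  (forall x, I x -> A x) /\ I 0 /\ (forall x y, I x -> I y -> I (x + y)) /\
  (forall a x, A a -> I x -> I (a * x)).

(* P is a prime ideal of A, i.e. a point of spec A. *)
Definition is_prime_ideal_of (A P : B -> Prop) : Prop :=
  is_ideal_of A P /\ ~ P 1 /\
  forall a b, A a -> A b -> P (a * b) -> P a \/ P b.

(* Zariski topology on spec A: closed sets are V(E) = {P in spec A | E ⊆ P}
   for subsets E of A. *)
Definition zariski_closure (A : B -> Prop) (S : (B -> Prop) -> Prop) :
    (B -> Prop) -> Prop :=
  fun Q => is_prime_ideal_of A Q /\
    forall E : B -> Prop, (forall x, E x -> A x) ->
      (forall P, S P -> is_prime_ideal_of A P /\ forall x, E x -> P x) ->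
      forall x, E x -> Q x.

Definition cap (M A : B -> Prop) : B -> Prop := fun x => M x /\ A x.

Definition subset (X Y : B -> Prop) : Prop := forall x, X x -> Y x.

Definition dense_subring (A : B -> Prop) : Prop :=
  forall I, is_ideal I -> forall b, ~ rad I b ->
    exists a, ~ rad I a /\ A (a * b).

Definition singleton_pt (P : B -> Prop) : (B -> Prop) -> Prop := fun Q => Q = P.

Definition weak_completely_normal (A : B -> Prop) : Prop :=
  forall M M', is_maximal_ideal M -> is_maximal_ideal M' -> ~ (forall x, M x <-> M' x) ->
    ~ subset (cap M A) (cap M' A) -> ~ subset (cap M' A) (cap M A) ->
    forall Q, zariski_closure A (singleton_pt (cap M A)) Q ->
              zariski_closure A (singleton_pt (cap M' A)) Q -> False.

Definition ideal_sum (I J : B -> Prop) : B -> Prop :=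
  fun z => exists x y, I x /\ J y /\ z = x + y.
End Defs.

(* Main.v *)
Require Import Defs.
From mathcomp Require Import all_boot all_algebra.
From mathcomp Require Import boolp classical_sets.
Import GRing.Theory.
Local Open Scope ring_scope.
Set Bullet Behavior "None".

Section Aux.
Variable B : comPzRingType.
Variable A : B -> Prop.
Hypothesis HA : is_subring A.

Lemma A0 : A 0.
Proof. case: HA => [H1 [Hs _]]. by rewrite -(subrr 1); apply: Hs. Qed.

Lemma AD x y : A x -> A y -> A (x + y).
Proof.
case: HA => [H1 [Hs _]] ax ay.
have ny : A (- y) by rewrite -sub0r; apply: Hs => //; exact: A0.
by rewrite -(opprK y); apply: Hs.
Qed.

Lemma AM x y : A x -> A y -> A (x * y).
Proof. by case: HA => [_ [_ Hm]]; apply: Hm. Qed.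

Definition good (J X : B -> Prop) :=
  is_ideal_of A X /\ ~ X 1 /\ (forall x, J x -> X x).

Lemma exists_prime (J : B -> Prop) : is_ideal_of A J -> ~ J 1 ->
  exists N, is_prime_ideal_of A N /\ (forall x, J x -> N x).
Proof.
move=> HJ nJ1.
pose P : set (set B) := fun X => X = set0 \/ good J X.
have [N [PN maxN]] : exists N, P N /\ forall C, (N `<` C)%classic -> ~ P C.
  apply: Zorn_bigcup => F FP Ftot.
  case: (pselect (exists X, F X /\ exists x, X x)); last first.
    move=> nE; left; apply/seteqP; split => x //= [X FX Xx].
    by apply: nE; exists X; split => //; exists x.
  move=> [X0 [FX0 [x0 X0x0]]].
  have goodF X : F X -> (exists x, X x) -> good J X.
    move=> FX [x Xx]; case: (FP X FX) => // X0e.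
    by rewrite X0e in Xx.
  have G0 := goodF X0 FX0 (ex_intro _ x0 X0x0).
  have sub1 x X : F X -> X x -> good J X.
    by move=> FX Xx; apply: goodF => //; exists x.
  right; split; [split; [|split; [|split]] | split].
  - by move=> x [X FX Xx]; case: (sub1 x X FX Xx) => [[H _] _]; apply: H.
  - exists X0 => //; case: G0 => [_ [_ HJX]]; apply: HJX; by case: HJ => [_ []].
  - move=> x y [X FX Xx] [Y FY Yy].
    have [XY|YX] := Ftot X Y FX FY.
    + exists Y => //; case: (sub1 y Y FY Yy) => [[_ [_ [Had _]]] _].
      by apply: Had => //; apply: XY.
    + exists X => //; case: (sub1 x X FX Xx) => [[_ [_ [Had _]]] _].
      by apply: Had => //; apply: YX.
  - move=> a x Aa [X FX Xx]; exists X => //.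
    by case: (sub1 x X FX Xx) => [[_ [_ [_ Hm]]] _]; apply: Hm.
  - by move=> [X FX X1]; case: (sub1 1 X FX X1) => [_ []].
  - move=> x Jx; exists X0 => //; by case: G0 => [_ [_ H]]; apply: H.
have GN : good J N.
  case: PN => // N0; exfalso; apply: (maxN J); last by right.
  rewrite N0; split => //; move=> H.
  by case: HJ => [_ [J0 _]]; apply: (H 0 J0).
have maxG : forall C, good J C -> (forall x, N x -> C x) -> forall x, C x -> N x.
  move=> C GC NC x Cx; apply: contrapT => nNx.
  apply: (maxN C); last by right.
  by split => // H; apply: nNx; apply: H.
exists N; split; last by case: GN => [_ [_]].
case: GN => [[NA [N0 [NAdd NMul]]] [nN1 JN]].
split; first by split => //; split.
split => // a b Aa Ab Nab.
case: (pselect (N a)) => Na; first by left.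
right.
pose K := fun x => exists n r, N n /\ A r /\ x = n + r * a.
have KA x : K x -> A x.
  by move=> [n [r [Nn [Ar ->]]]]; apply: AD; [apply: NA|apply: AM].
have NK x : N x -> K x.
  by move=> Nx; exists x, 0; split => //; split; [exact: A0| rewrite mul0r addr0].
case: (pselect (K 1)) => K1; last first.
  exfalso; apply: Na; apply: (maxG K).
  - split; [split; [|split; [|split]] | split] => //.
    + by apply: NK.
    + move=> x y [n1 [r1 [N1 [A1 ->]]]] [n2 [r2 [N2 [A2 ->]]]].
      exists (n1 + n2), (r1 + r2); split; first by apply: NAdd.
      split; first by apply: AD.
      by rewrite mulrDl !addrA; congr (_ + _); rewrite -!addrA; congr (_ + _); rewrite addrC.
    + move=> c x Ac [n [r [Nn [Ar ->]]]]; exists (c * n), (c * r).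
      split; first by apply: NMul.
      split; first by apply: AM.
      by rewrite mulrDr mulrA.
    + by move=> x Jx; apply: NK; apply: JN.
  - exact: NK.
  - by exists 0, 1; split => //; split; [case: HA|rewrite add0r mul1r].
move: K1 => [n [r [Nn [Ar E]]]].
have -> : b = b * n + r * (a * b).
  by rewrite -[b in LHS]mulr1 E mulrDr [b * (r * a)]mulrC -mulrA.
apply: NAdd; first by apply: NMul.
by apply: NMul.
Qed.

End Aux.

Section Max.
Variable B : comPzRingType.

Lemma max_prime (M : B -> Prop) : is_maximal_ideal M ->
  forall x y, M (x * y) -> M x \/ M y.
Proof.
move=> [[M0 [MD MM]] [nM1 Mmax]] x y Mxy.
case: (pselect (M x)) => Mx; first by left.
right.
pose K := fun z => exists m r, M m /\ z = m + r * x.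
have K1 : K 1.
  apply: contrapT => nK1; apply: Mx; apply: (Mmax K).
  - split; [exists 0, 0; split => //; by rewrite mul0r addr0|split].
    + move=> u v [m1 [r1 [M1 ->]]] [m2 [r2 [M2 ->]]].
      exists (m1 + m2), (r1 + r2); split; first by apply: MD.
      by rewrite mulrDl !addrA; congr (_ + _); rewrite -!addrA; congr (_ + _); rewrite addrC.
    + move=> c u [m [r [Mm ->]]]; exists (c * m), (c * r); split; first by apply: MM.
      by rewrite mulrDr mulrA.
  - by move=> u Mu; exists u, 0; split => //; rewrite mul0r addr0.
  - exact: nK1.
  - by exists 0, 1; split => //; rewrite add0r mul1r.
move: K1 => [m [r [Mm E]]].
have -> : y = y * m + r * (x * y).
  by rewrite -[y in LHS]mulr1 E mulrDr [y * (r * x)]mulrC -mulrA.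
by apply: MD; apply: MM.
Qed.

Lemma max_rad (M : B -> Prop) : is_maximal_ideal M -> forall x, Defs.rad M x -> M x.
Proof.
move=> HM x [n]; elim: n => [|n IH].
  by rewrite expr0 => H; case: HM => [_ [H1 _]]; case: H1.
by rewrite exprS => /(@max_prime M HM) [].
Qed.
End Max.

Theorem theorem4p5 (B : comPzRingType) (A : B -> Prop) :
  is_subring A -> dense_subring A -> weak_completely_normal A ->
  forall M M' : B -> Prop, is_maximal_ideal M -> is_maximal_ideal M' -> ~ (forall x, M x <-> M' x) ->
  forall z, ideal_sum (cap M A) (cap M' A) z <-> A z.
Proof.
move=> HA Hd Hw M M' HM HM' Hne z; split.
  by move=> [x [y [[_ Ax] [[_ Ay] ->]]]]; apply: AD.
move=> Az.
have noncomp : forall M M' : B -> Prop, is_maximal_ideal M -> is_maximal_ideal M' ->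
    ~ (forall x, M x <-> M' x) -> ~ Defs.subset (cap M A) (cap M' A).
  move=> N N' HN HN' Hne' Hsub.
  have [b [Nb nN'b]] : exists b, N b /\ ~ N' b.
    apply: contrapT => H; apply: Hne'.
    have NN' : forall x, N x -> N' x.
      move=> x Nx; apply: contrapT => nx; apply: H; by exists x.
    move=> x; split; first exact: NN'.
    case: HN => [_ [_ Nmax]]; apply: Nmax => //; first by case: HN'.
    by case: HN' => [_ []].
  have nrb : ~ Defs.rad N' b by move=> /(@max_rad B N' HN').
  have [a [nra Aab]] := Hd N' (proj1 HN') b nrb.
  have Nab : N (a * b) by case: HN => [[_ [_ HM3]] _]; apply: HM3.
  have [N'a|N'b] := @max_prime B N' HN' _ _ (proj1 (Hsub _ (conj Nab Aab))).
    by apply: nra; exists 1%N; rewrite expr1.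
  by apply: nN'b.
apply: contrapT => nz.
pose J := ideal_sum (cap M A) (cap M' A).
have hM := HM; have hM' := HM'.
case: hM => [[M0 [MD MM]] _]; case: hM' => [[M'0 [M'D M'M]] _].
have HJ : is_ideal_of A J.
  split; [|split; [|split]].
  - by move=> x [u [v [[_ Au] [[_ Av] ->]]]]; apply: AD.
  - exists 0, 0; split; first by split => //; apply: A0.
    by split; [split => //; apply: A0|rewrite addr0].
  - move=> x y [u1 [v1 [[M1 A1] [[N1 B1] ->]]]] [u2 [v2 [[M2 A2] [[N2 B2] ->]]]].
    exists (u1 + u2), (v1 + v2); split; first by split; [apply: MD|apply: AD].
    split; first by split; [apply: M'D|apply: AD].
    by rewrite !addrA; congr (_ + _); rewrite -!addrA; congr (_ + _); rewrite addrC.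
  - move=> c x Ac [u [v [[M1 A1] [[N1 B1] ->]]]].
    exists (c * u), (c * v); split; first by split; [apply: MM|apply: AM].
    split; first by split; [apply: M'M|apply: AM].
    by rewrite mulrDr.
have nJ1 : ~ J 1.
  move=> J1; apply: nz; case: HJ => [_ [_ [_ Hm]]].
  by rewrite -(mulr1 z); apply: Hm.
have [N [PN JN]] := @exists_prime B A HA J HJ nJ1.
apply: (Hw M M' HM HM' Hne (noncomp M M' HM HM' Hne) _ N).
- apply: (noncomp M' M HM' HM) => H; apply: Hne => x; by split => /H.
- split => // E EA HE x Ex; apply: JN.
  have [_ EM] := HE (cap M A) erefl.
  exists x, 0; split; first exact: EM.
  by split; [split => //; apply: A0|rewrite addr0].
- split => // E EA HE x Ex; apply: JN.
  have [_ EM] := HE (cap M' A) erefl.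
  exists 0, x; split; first by split => //; apply: A0.
  by split; [exact: EM|rewrite add0r].
Qed.
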